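(* Let $p$ be an odd prime, and let $q$ denote the smallest prime greater than $p/2$. Write $p=p_n$, where $p_k$ denotes the $k$-th prime, and let $p_{n+1}$ be the next prime after $p$. Then the following two conditions are equivalent: (1) all the integers $\frac{p+1}{2},\frac{p+3}{2},\dots,\frac{p_{n+1}-1}{2}$ are composite; (2) the open interval $(p,\,2q)$ contains a prime.
   Context: $p_k$ denotes the $k$-th prime ($p_1=2$, $p_2=3,\dots$). Since $p/2$ is not an integer, the smallest prime $q$ greater than $p/2$ is the prime $p_{m+1}$ with $p_m<p/2<p_{m+1}$. *)

(* Defs.v *)
From mathcomp Require Import all_boot.
Set Implicit Arguments. Unset Strict Implicit. Unset Printing Implicit Defensive.

Definition composite (k : nat) : bool := (1 < k) && ~~ prime k.

Definition is_least_prime_above_half (p q : nat) : Prop :=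
  [/\ prime q, p < 2 * q & forall r, prime r -> p < 2 * r -> q <= r].

Definition is_next_prime (p pn1 : nat) : Prop :=
  [/\ prime pn1, p < pn1 & forall r, prime r -> p < r -> pn1 <= r].

(* Main.v *)
Require Import Defs.
From mathcomp Require Import all_boot.
From mathcomp Require Import zify.

Theorem lemma1 (p q pn1 : nat) :
  prime p -> odd p ->
  is_least_prime_above_half p q ->
  is_next_prime p pn1 ->
  ((forall k, (p + 1) %/ 2 <= k <= (pn1 - 1) %/ 2 -> composite k) <->
   (exists r, [/\ prime r, p < r & r < 2 * q])).
Proof.
move=> pp op [qp pq qmin] [np pn nmin].
have p3 : 2 < p.
  have := prime_gt1 pp; case: p pp op {pq qmin pn nmin} => [|[|[|n]]] //.
have on : odd pn1.
  by case: (even_prime np) => // E; lia.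
have oq : ~~ odd (2 * q) by rewrite oddM.
split.
- move=> H; exists pn1; split => //.
  have q1 : (p + 1) %/ 2 <= q by lia.
  have : ~~ ((q <= (pn1 - 1) %/ 2)).
    apply/negP => qle; have := H q; rewrite q1 qle /composite qp andbF.
    by move=> /(_ isT).
  move=> nle.
  have : pn1 != 2 * q by apply/eqP => E; move: on; rewrite E (negbTE oq).
  move/eqP; lia.
- move=> [r [rp pr rq]] k /andP [k1 k2].
  rewrite /composite; apply/andP; split; first lia.
  apply/negP => kp.
  have := qmin k kp; have := nmin r rp pr; lia.
Qed.
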